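(* Let $\Sigma$ be a real symmetric positive definite $n\times n$ matrix, let $D_0$ be the diagonal matrix with $[D_0]_{ii}=\dfrac{1}{2[\Sigma^{-1}]_{ii}}$, and let $\lambda_{\min}$ be the smallest eigenvalue of $D_0^{-1/2}\Sigma D_0^{-1/2}$. Let \[\mathcal S(\Sigma)=\{(\hat\Sigma,\tilde\Sigma)\mid \Sigma=\hat\Sigma+\tilde\Sigma,\ \hat\Sigma\ge0,\ \tilde\Sigma\ge 0,\ \tilde\Sigma\text{ diagonal}\},\] $L(K,\hat\Sigma,\tilde\Sigma)=\operatorname{trace}(\hat\Sigma-K\hat\Sigma-\hat\Sigma K'+K(\hat\Sigma+\tilde\Sigma)K')$ for $K\in\mathbb R^{n\times n}$, and for $\lambda\ge 0$ let $(\hat\Sigma_{\lambda,\rm opt},\tilde\Sigma_{\lambda,\rm opt})$ be the (unique) maximizer over $\mathcal S(\Sigma)$ of \[\min_K\big(L(K,\hat\Sigma,\tilde\Sigma)-\lambda\operatorname{trace}(\hat\Sigma)\big)=\operatorname{trace}\big((1-\lambda)\hat\Sigma-\hat\Sigma\Sigma^{-1}\hat\Sigma\big).\] Then for every $\lambda\ge 0$ with $\lambda\ge\lambda_{\min}-1$, the matrix $\hat\Sigma_{\lambda,\rm opt}$ is singular.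
   Context: All matrices $\hat\Sigma,\tilde\Sigma$ are real symmetric $n\times n$; $M\ge0$ means positive semidefinite. This maximizer corresponds to the regularized min-max problem $\min_K\max_{\mathcal S(\Sigma)}(L-\lambda\operatorname{trace}(\hat\Sigma))$, for which min and max can be exchanged. *)

(* Defs.v *)
From HB Require Import structures.
From mathcomp Require Import all_boot all_order all_algebra.
Set Implicit Arguments. Unset Strict Implicit. Unset Printing Implicit Defensive.
Import Order.TTheory GRing.Theory Num.Theory.
Local Open Scope ring_scope.

Section Defs.
Variable R : rcfType.
Variable n : nat.

Definition psd (A : 'M[R]_n) : Prop :=
  A^T = A /\ forall v : 'cV[R]_n, 0 <= (v^T *m A *m v) 0 0.

Definition pd (A : 'M[R]_n) : Prop :=
  A^T = A /\ forall v : 'cV[R]_n, v != 0 -> 0 < (v^T *m A *m v) 0 0.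

Definition D0 (S : 'M[R]_n) : 'M[R]_n :=
  diag_mx (\row_i (2 * invmx S i i)^-1).

Definition D0_invsqrt (S : 'M[R]_n) : 'M[R]_n :=
  diag_mx (\row_i (Num.sqrt (D0 S i i))^-1).

Definition is_min_eigenvalue (A : 'M[R]_n) (l : R) : Prop :=
  eigenvalue A l /\ forall m, eigenvalue A m -> l <= m.

Definition in_S (S Sh St : 'M[R]_n) : Prop :=
  S = Sh + St /\ psd Sh /\ psd St /\ is_diag_mx St.

(* min_K (L(K,Sh,St) - lam tr Sh) = tr((1-lam) Sh - Sh S^-1 Sh) *)
Definition objective (S : 'M[R]_n) (lam : R) (Sh : 'M[R]_n) : R :=
  \tr ((1 - lam) *: Sh - Sh *m invmx S *m Sh).

Definition is_maximizer (S : 'M[R]_n) (lam : R) (Sh St : 'M[R]_n) : Prop :=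
  in_S S Sh St /\
  forall Sh' St', in_S S Sh' St' -> objective S lam Sh' <= objective S lam Sh.

End Defs.

(* Main.v *)
Require Import Defs.
From HB Require Import structures.
From mathcomp Require Import all_boot all_order all_algebra.
From mathcomp Require Import ring lra.
Import Order.TTheory GRing.Theory Num.Theory.
Local Open Scope ring_scope.
Set Implicit Arguments. Unset Strict Implicit.

Definition qf (R : rcfType) n (A : 'M[R]_n) (x y : 'cV[R]_n) : R :=
  (x^T *m A *m y) 0 0.

Lemma qf_sym (R : rcfType) n (A : 'M[R]_n) x y : A^T = A -> qf A y x = qf A x y.
Proof.
move=> HA; rewrite /qf.
have e (B : 'M[R]_1) : B 0 0 = B^T 0 0 by rewrite mxE.
rewrite [RHS]e.
by rewrite !trmx_mul trmxK HA mulmxA.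
Qed.

Lemma qf_expand (R : rcfType) n (A : 'M[R]_n) x y s : A^T = A ->
  qf A (x + s *: y) (x + s *: y) = qf A x x + 2 * s * qf A x y + s ^+ 2 * qf A y y.
Proof.
move=> HA; rewrite /qf.
have -> : (x + s *: y)^T = x^T + s *: y^T by apply/matrixP=> i j; rewrite !mxE.
rewrite !mulmxDl !mulmxDr.
rewrite -!scalemxAl -!scalemxAr.
have := qf_sym x y HA; rewrite /qf.
set a := x^T *m A *m x; set b := y^T *m A *m x; set c := x^T *m A *m y.
set d := y^T *m A *m y.
move=> E; clearbody a b c d. rewrite !mxE E. ring.
Qed.

Lemma psd_cs (R : rcfType) n (A : 'M[R]_n) x y : psd A ->
  qf A x y ^+ 2 <= qf A x x * qf A y y.
Proof.
case=> HA Hq.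
set a := qf A x x; set b := qf A x y; set c := qf A y y.
have H s : 0 <= a + 2 * s * b + s ^+ 2 * c.
  by rewrite -qf_expand //; apply: Hq.
have c0 : 0 <= c by apply: Hq.
have [cz|cp] := eqVneq c 0.
  have b0 : b = 0.
    apply/eqP; apply/negP => /negP bn.
    have := H (- (a + 1) / (2 * b)); rewrite cz mulr0 addr0.
    have -> : 2 * (- (a + 1) / (2 * b)) * b = - (a + 1) by field; rewrite bn /=.
    lra.
  by rewrite b0 cz expr0n /= mulr0.
have cpos : 0 < c by rewrite lt0r cp.
have := H (- b / c).
have -> : a + 2 * (- b / c) * b + (- b / c) ^+ 2 * c = (a * c - b ^+ 2) / c by field.
move=> h; have := mulr_ge0 h (ltW cpos).
by rewrite divfK // subr_ge0.
Qed.

Lemma qf_inv (R : rcfType) n (A : 'M[R]_n) x i : A \in unitmx ->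
  qf A x (invmx A *m delta_mx i 0) = x i 0.
Proof.
move=> AU; rewrite /qf -mulmxA (mulmxA A) mulmxV // mul1mx -colE !mxE //.
Qed.

Lemma qf_delta (R : rcfType) n (x : 'cV[R]_n) i :
  qf (delta_mx i i) x x = x i 0 ^+ 2.
Proof.
rewrite /qf -(mul_delta_mx (0 : 'I_1)) mulmxA -colE -mulmxA -rowE.
by rewrite !mxE big_ord1 !mxE expr2.
Qed.

Lemma qf_lin (R : rcfType) n (A B : 'M[R]_n) t x :
  qf (A + t *: B) x x = qf A x x + t * qf B x x.
Proof.
rewrite /qf mulmxDr mulmxDl -scalemxAr -scalemxAl.
set a := x^T *m A *m x; set b := x^T *m B *m x; clearbody a b.
by rewrite !mxE.
Qed.

Lemma tr_delta_l (R : rcfType) n (M : 'M[R]_n) i : \tr (delta_mx i i *m M) = M i i.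
Proof.
rewrite -(mul_delta_mx (0 : 'I_1)) -mulmxA mxtrace_mulC -rowE -colE.
by rewrite /mxtrace big_ord1 !mxE.
Qed.

Lemma tr_delta_r (R : rcfType) n (M : 'M[R]_n) i : \tr (M *m delta_mx i i) = M i i.
Proof. by rewrite mxtrace_mulC tr_delta_l. Qed.

Lemma diag_mul_l (R : rcfType) n (D P : 'M[R]_n) i : is_diag_mx D ->
  (D *m P) i i = D i i * P i i.
Proof.
move/is_diag_mxP => HD; rewrite mxE (bigD1 i) //= big1 ?addr0 // => k ki.
by rewrite HD ?mul0r // eq_sym.
Qed.

Lemma diag_mul_r (R : rcfType) n (D P : 'M[R]_n) i : is_diag_mx D ->
  (P *m D) i i = P i i * D i i.
Proof.
move/is_diag_mxP => HD; rewrite mxE (bigD1 i) //= big1 ?addr0 // => k ki.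
by rewrite HD ?mulr0.
Qed.

Lemma diag_qf (R : rcfType) n (D : 'M[R]_n) u : is_diag_mx D ->
  qf D u u = \sum_j D j j * u j 0 ^+ 2.
Proof.
move/is_diag_mxP => HD; rewrite /qf mxE; apply: eq_bigr => j _.
rewrite mxE (bigD1 j) //= big1 ?addr0 ?mxE; first by rewrite expr2; ring.
by move=> k kj; rewrite HD ?mulr0.
Qed.

Lemma obj_pert (R : rcfType) n (S Sh D : 'M[R]_n) lam t i :
  (forall M, \tr (D *m M) = M i i) -> (forall M, \tr (M *m D) = M i i) ->
  (forall M, (M *m D) i i = M i i) -> \tr D = 1 ->
  objective S lam (Sh + (- t) *: D) =
  objective S lam Sh + t * ((Sh *m invmx S) i i + (invmx S *m Sh) i i - (1 - lam))
  - t ^+ 2 * invmx S i i.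
Proof.
move=> Hl Hr Hd H1.
rewrite /objective.
set P := invmx S.
rewrite !mulmxDl !mulmxDr -!scalemxAl -!scalemxAr !scalerDr.
have trN (A : 'M[R]_n) : \tr (- A) = - \tr A by rewrite -scaleN1r mxtraceZ mulN1r.
rewrite !opprD !mxtraceD !trN !mxtraceZ.
rewrite -!mulmxA Hl Hl (mulmxA Sh P D) Hr Hd H1.
ring.
Qed.

Lemma delta_props (R : rcfType) n (i : 'I_n) :
  let D := (delta_mx i i : 'M[R]_n) in
  [/\ (forall M, \tr (D *m M) = M i i), (forall M, \tr (M *m D) = M i i),
      (forall M, (M *m D) i i = M i i) & \tr D = 1].
Proof.
move=> D; split.
- by move=> M; apply: tr_delta_l.
- by move=> M; apply: tr_delta_r.
- move=> M; rewrite mxE (bigD1 i) //= big1 ?addr0 ?mxE ?eqxx ?mulr1 // => k ki.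
  by rewrite mxE (negPf ki) mulr0.
- by rewrite -[D]mul1mx tr_delta_r mxE eqxx.
Qed.

Lemma pert_psd (R : rcfType) n (A : 'M[R]_n) i : psd A -> A \in unitmx ->
  exists2 t0, 0 < t0 & forall t, 0 < t <= t0 -> psd (A + (- t) *: delta_mx i i).
Proof.
move=> [HA Hq] AU.
pose y : 'cV[R]_n := invmx A *m delta_mx i 0.
set c := qf A y y.
have c0 : 0 <= c by apply: Hq.
exists (c + 1)^-1; first by rewrite invr_gt0; lra.
move=> t /andP [t0 tle]; split.
  by rewrite linearD linearZ /= trmx_delta HA.
move=> x.
have := qf_lin A (delta_mx i i) (- t) x; rewrite /qf => ->.
have := qf_delta x i; rewrite /qf => ->.
have := psd_cs x y (conj HA Hq); rewrite qf_inv // -/c.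
have qx : 0 <= qf A x x by apply: Hq.
rewrite /qf in qx *.
set q := (x^T *m A *m x) 0 0 in qx *.
set xi := x i 0.
move=> cs.
have tc : t * (c + 1) <= 1.
  have cp : 0 < c + 1 by lra.
  by rewrite -ler_pdivlMr // div1r.
have h1 : t * xi ^+ 2 <= t * (q * c) by rewrite ler_pM2l.
have h2 : q * (t * (c + 1)) <= q * 1 by rewrite ler_wpM2l.
have h3 : 0 <= q * t by rewrite mulr_ge0 // ltW.
nra.
Qed.

Lemma small_t (R : rcfType) (a p t0 : R) : 0 < t0 -> 0 < p ->
  (forall t, 0 < t <= t0 -> t * a - t ^+ 2 * p <= 0) -> a <= 0.
Proof.
move=> t0p pp H; rewrite leNgt; apply/negP => ap.
pose t := Num.min t0 (a / (2 * p)).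
have tp : 0 < t by rewrite lt_min t0p divr_gt0 //; lra.
have := H t; rewrite tp ge_min lexx /= => /(_ isT).
have : t <= a / (2 * p) by rewrite ge_min lexx orbT.
move=> tle h.
have : t * p <= a / 2.
  have := ler_pM2r pp; move=> e.
  rewrite -(e t (a / (2 * p))) in tle.
  by move: tle; have -> : a / (2 * p) * p = a / 2 by field; lra.
move=> h2.
have : t * (a - t * p) <= 0 by move: h; rewrite expr2; lra.
rewrite pmulr_rle0 //; lra.
Qed.

Lemma pd_unit (R : rcfType) n (S : 'M[R]_n) : pd S -> S \in unitmx.
Proof.
move=> [HS Hq]; rewrite unitmxE unitfE; apply/negP => /det0P [v vn vS].
have : v^T != 0 by rewrite trmx_eq0.
move/Hq; rewrite trmxK vS mul0mx mxE ltxx //.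
Qed.

Lemma pd_inv_diag (R : rcfType) n (S : 'M[R]_n) i : pd S -> 0 < invmx S i i.
Proof.
move=> [HS Hq]; have SU : S \in unitmx by apply: pd_unit.
pose y : 'cV[R]_n := invmx S *m delta_mx i 0.
have yn : y != 0.
  apply/negP => /eqP y0.
  have : S *m y = delta_mx i 0 by rewrite /y mulmxA mulmxV // mul1mx.
  rewrite y0 mulmx0 => /matrixP /(_ i 0); rewrite !mxE !eqxx /=.
  by move/eqP; rewrite eq_sym oner_eq0.
have := Hq _ yn; have := qf_inv y i SU; rewrite /qf => ->.
by rewrite /y -colE mxE.
Qed.

Unset Implicit Arguments. Set Strict Implicit.

Theorem mainTheorem18 (R : rcfType) (n : nat) (S : 'M[R]_n) (lmin lam : R)
    (Sh St : 'M[R]_n) :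
  pd S ->
  is_min_eigenvalue (D0_invsqrt S *m S *m D0_invsqrt S) lmin ->
  0 <= lam -> lmin - 1 <= lam ->
  is_maximizer S lam Sh St ->
  Sh \notin unitmx.
Proof.
move=> pdS [/eigenvalueP [w wM wn] _] lam0 hlam [[HSdec [Shpsd [Stpsd Stdiag]]] Hmax].
apply/negP => ShU.
have SU := pd_unit pdS.
have HS := pdS.1.
pose P := invmx S.
have Ppos i : 0 < P i i by apply: pd_inv_diag.
have ShE : Sh = S - St by rewrite HSdec addrK.
(* first order condition *)
have FO i : 1 + lam <= 2 * St i i * P i i.
  have [t0 t0p Ht] := pert_psd i Shpsd ShU.
  have [Hl Hr Hd H1] := delta_props R i.
  have key t : 0 < t <= t0 -> t * (1 + lam - 2 * St i i * P i i) - t ^+ 2 * P i i <= 0.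
    move=> tH.
    have inS : in_S S (Sh + (- t) *: delta_mx i i) (St + t *: delta_mx i i).
      split; first by rewrite HSdec addrACA scaleNr addNr addr0.
      split; first exact: Ht.
      split.
        split; first by rewrite linearD linearZ /= trmx_delta Stpsd.1.
        move=> x; have := qf_lin St (delta_mx i i) t x; rewrite /qf => ->.
        have := qf_delta x i; rewrite /qf => ->.
        rewrite addr_ge0 ?Stpsd.2 // mulr_ge0 ?sqr_ge0 //; case/andP: tH => /ltW.
        done.
      apply/is_diag_mxP => a b ab; rewrite !mxE (elimT is_diag_mxP Stdiag a b ab).
          case: (a =P i) => [ai|]; last by rewrite /= mulr0 addr0.
      have ba : (b == a) = false by apply/negP => /eqP ba; move: ab; rewrite ba eqxx.
      by rewrite -ai ba mulr0 addr0.
    have := Hmax _ _ inS.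
    rewrite (obj_pert S Sh lam t Hl Hr Hd H1) -/P.
    have e1 : (Sh *m P) i i = 1 - St i i * P i i.
      have h := diag_mul_l P i Stdiag.
      rewrite ShE mulmxBl mulmxV // -h.
      by move: (St *m P) => M; rewrite !mxE eqxx.
    have e2 : (P *m Sh) i i = 1 - P i i * St i i.
      have h := diag_mul_r P i Stdiag.
      rewrite ShE mulmxBr mulVmx // -h.
      by move: (P *m St) => M; rewrite !mxE eqxx.
    rewrite e1 e2 => h.
    have : t * (1 - St i i * P i i + (1 - P i i * St i i) - (1 - lam)) -
       t ^+ 2 * P i i <= 0 by lra.
    congr (_ <= _); ring.
  have := small_t t0p (Ppos i) key; lra.
pose Q := D0_invsqrt S.
pose d j := D0 S j j.
have dE j : d j = (2 * P j j)^-1.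
  by rewrite /d /D0 !mxE eqxx mulr1n.
have dpos j : 0 < d j by rewrite dE invr_gt0 mulr_gt0 ?Ppos.
pose q j := (Num.sqrt (d j))^-1.
have qn j : q j != 0 by rewrite invr_eq0 sqrtr_eq0 -ltNge dpos.
have q2 j : q j ^+ 2 = 2 * P j j by rewrite exprVn sqr_sqrtr ?ltW // dE invrK.
have QT : Q^T = Q by rewrite /Q /D0_invsqrt tr_diag_mx.
pose u : 'cV[R]_n := (w *m Q)^T.
have uE j : u j 0 = w 0 j * q j.
  by rewrite /u mxE /Q /D0_invsqrt mul_mx_diag !mxE eqxx mulr1n /q dE.
pose W := \sum_j w 0 j ^+ 2.
have W0 : 0 <= W by apply: sumr_ge0 => j _; apply: sqr_ge0.
have qS : qf S u u = lmin * W.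
  rewrite /qf /u trmxK trmx_mul QT -!mulmxA (mulmxA S) (mulmxA Q) (mulmxA w).
  rewrite (mulmxA Q S Q) wM -scalemxAl mxE mxE /W !mulr_sumr; apply: eq_bigr => j _.
  by rewrite mxE expr2 mulrA.
have qSt : (1 + lam) * W <= qf St u u.
  rewrite diag_qf // /W mulr_sumr; apply: ler_sum => j _.
  rewrite uE exprMn q2.
  have := FO j; have := sqr_ge0 (w 0 j); move: (w 0 j ^+ 2) => z z0 h.
  have := ler_wpM2r z0 h; move=> h2.
  suff -> : St j j * (z * (2 * P j j)) = 2 * St j j * P j j * z by [].
  ring.
have qSh : qf Sh u u = 0.
  apply/eqP; rewrite eq_le; apply/andP; split; last exact: Shpsd.2.
  have -> : Sh = S + (-1) *: St by rewrite ShE scaleN1r.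
  rewrite qf_lin qS; nra.
have u0 j : u j 0 = 0.
  have := psd_cs u (invmx Sh *m delta_mx j 0) Shpsd.
  rewrite qf_inv // qSh mul0r => h.
  by apply/eqP; rewrite -sqrf_eq0 eq_le h sqr_ge0.
move/negP: wn; apply; apply/eqP/matrixP => a j.
rewrite (ord1 a) mxE.
by move: (u0 j); rewrite uE => /eqP; rewrite mulf_eq0 (negPf (qn j)) orbF => /eqP.
Qed.
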